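(* Let $\mu$ be a signature and let $\mathcal A$ be an ideal of $\Omega_\mu$ which has the amalgamation property and satisfies $|\mathcal A|\le\aleph_1$. Then $\mathcal A$ is representable, i.e. there is a relational structure $\mathfrak A$ of signature $\mu$ with $\mathrm{age}(\mathfrak A)=\mathcal A$.
   Context: A signature is a map $\mu:I\to\mathbb{N}^*$; relational structures of signature $\mu$, embeddings, embeddability $\le$, $\Omega_\mu$ (isomorphism types of finite structures of signature $\mu$ ordered by $\le$), ideals (non-empty, downward closed, up-directed subsets) and ages (sets of isomorphism types of finite induced substructures) are as usual. $\mathcal A$ has the amalgamation property if for all embeddings $f_1:\mathfrak A\to\mathfrak A_1$, $f_2:\mathfrak A\to\mathfrak A_2$ with $\mathfrak A,\mathfrak A_1,\mathfrak A_2$ of type in $\mathcal A$ there are embeddings $g_1:\mathfrak A_1\to\mathfrak B$, $g_2:\mathfrak A_2\to\mathfrak B$ with $\mathfrak B$ of type in $\mathcal A$ and $g_1\circ f_1=g_2\circ f_2$. *)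

(* Defs.v *)
From Stdlib Require Import Wellfounded.
From mathcomp Require Import all_boot.

Set Implicit Arguments.
Unset Strict Implicit.
Unset Printing Implicit Defensive.

Record structure (I : Type) (mu : I -> nat) := Structure {
  carrier :> Type;
  rel : forall i : I, (mu i).-tuple carrier -> Prop
}.

Section Defs.
Variables (I : Type) (mu : I -> nat).

Definition embedding (A B : structure mu) (f : A -> B) : Prop :=
  injective f /\
  forall (i : I) (t : (mu i).-tuple A), @rel I mu A i t <-> @rel I mu B i (map_tuple f t).

Definition embeds (A B : structure mu) : Prop := exists f : A -> B, embedding f.

(* Finite structures, with carrier {0,...,n-1} (every finite structure is
   isomorphic to one of these; n = 0 gives the empty structure). *)
Definition fstruct : Type :=
  { n : nat & forall i : I, (mu i).-tuple 'I_n -> Prop }.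

Definition fs (F : fstruct) : structure mu :=
  @Structure I mu 'I_(projT1 F) (projT2 F).

Definition iso (F G : fstruct) : Prop :=
  exists f : fs F -> fs G, embedding f /\ forall y, exists x, f x = y.

(* Embeddability <= on finite structures (it is invariant under iso, so it
   is the order of Omega_mu). *)
Definition fle (F G : fstruct) : Prop := embeds (fs F) (fs G).

(* A subset of Omega_mu is represented by its (iso-closed) predicate on
   fstruct.  Ideal: non-empty, downward closed, up-directed. *)
Definition ideal (P : fstruct -> Prop) : Prop :=
  (exists F, P F) /\
  (forall F G, P G -> fle F G -> P F) /\
  (forall F G, P F -> P G -> exists H, P H /\ fle F H /\ fle G H).

Definition amalgamation (P : fstruct -> Prop) : Prop :=
  forall (A A1 A2 : fstruct) (f1 : fs A -> fs A1) (f2 : fs A -> fs A2),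
    P A -> P A1 -> P A2 -> embedding f1 -> embedding f2 ->
    exists (B : fstruct) (g1 : fs A1 -> fs B) (g2 : fs A2 -> fs B),
      P B /\ embedding g1 /\ embedding g2 /\
      forall x, g1 (f1 x) = g2 (f2 x).

(* age(S): the finite structures (up to iso) that are isomorphic to an induced
   finite substructure of S, i.e. that embed into S. *)
Definition age (S : structure mu) (F : fstruct) : Prop := embeds (fs F) S.

End Defs.

(* Cardinality at most aleph_1: T carries a strict well-order all of whose
   proper initial segments are countable. *)
Definition countable_type (T : Type) : Prop :=
  exists f : T -> nat, injective f.

Definition card_le_aleph1 (T : Type) : Prop :=
  exists lt : T -> T -> Prop,
    well_founded lt /\ (forall x y z, lt x y -> lt y z -> lt x z) /\
    (forall x y, lt x y \/ x = y \/ lt y x) /\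
    (forall t, countable_type {x : T | lt x t}).

(* |P| <= aleph_1 for a set P of isomorphism types: there is a family of at
   most aleph_1 members of P meeting every isomorphism class of P. *)
Definition iso_types_le_aleph1 (I : Type) (mu : I -> nat)
    (P : fstruct mu -> Prop) : Prop :=
  exists (T : Type) (g : T -> fstruct mu),
    card_le_aleph1 T /\ (forall t, P (g t)) /\
    (forall F, P F -> exists t, iso F (g t)).

(* Main.v *)
Require Import Defs.
From mathcomp Require Import all_boot.
From Stdlib Require Import ClassicalEpsilon ProofIrrelevance FunctionalExtensionality.

Set Implicit Arguments.
Unset Strict Implicit.
Unset Printing Implicit Defensive.

Lemma sig_inj (A : Type) (Q : A -> Prop) (x y : sig Q) :
  proj1_sig x = proj1_sig y -> x = y.
Proof.
case: x => a ha; case: y => b hb /= E; subst b.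
by rewrite (proof_irrelevance _ ha hb).
Qed.

Lemma tuple_map_inj (A B : Type) (f : A -> B) n (t1 t2 : n.-tuple A) :
  injective f -> map_tuple f t1 = map_tuple f t2 -> t1 = t2.
Proof.
move=> fi E; apply: val_inj => /=.
have : map f t1 = map f t2 by have := f_equal val E.
exact: inj_map.
Qed.

Lemma map_tuple_comp (A B C : Type) (f : A -> B) (g : B -> C) n (t : n.-tuple A) :
  map_tuple (fun x => g (f x)) t = map_tuple g (map_tuple f t).
Proof. by apply: val_inj => /=; rewrite map_comp. Qed.

Lemma map_tuple_ext (A B : Type) (f g : A -> B) n (t : n.-tuple A) :
  (forall x, f x = g x) -> map_tuple f t = map_tuple g t.
Proof. by move=> e; apply: val_inj => /=; apply: eq_map. Qed.

Lemma seq_lift (A B : Type) (f : A -> B) (s : seq B) :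
  (forall y, List.In y s -> exists x, f x = y) -> exists s', map f s' = s.
Proof.
elim: s => [|b s IH] H; first by exists [::].
have [x fx] := H b (or_introl erefl).
have [s' e] : exists s', map f s' = s by apply: IH => y hy; apply: H; right.
by exists (x :: s'); rewrite /= fx e.
Qed.

Lemma tuple_lift (A B : Type) (f : A -> B) n (t : n.-tuple B) :
  (forall y, List.In y t -> exists x, f x = y) -> exists t' : n.-tuple A, map_tuple f t' = t.
Proof.
move=> H; have [s' e] := seq_lift H.
have sz : size s' == n by rewrite -(size_map f) e size_tuple.
exists (Tuple sz); apply: val_inj => /=; exact e.
Qed.

Lemma In_map_tuple (A B : Type) (f : A -> B) n (t : n.-tuple A) y :
  List.In y (map_tuple f t) -> exists x, f x = y.
Proof. move=> /= /List.in_map_iff [x [h _]]; by exists x. Qed.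

Lemma In_mem (T : eqType) (x : T) (s : seq T) : x \in s -> List.In x s.
Proof.
elim: s => [|a s IH] //=; rewrite in_cons => /orP [/eqP ->|h]; [by left|right; exact: IH].
Qed.

Notation srel := (@Defs.rel _ _ _ _).

Section Emb.
Variables (I : Type) (mu : I -> nat).

Lemma emb_comp (X Y Z : structure mu) (f : X -> Y) (g : Y -> Z) :
  embedding f -> embedding g -> embedding (fun x => g (f x)).
Proof.
move=> [fi fr] [gi gr]; split; first by move=> x y /gi /fi.
move=> i t; rewrite map_tuple_comp; rewrite fr; exact: gr.
Qed.

Lemma embeds_trans (X Y Z : structure mu) : embeds X Y -> embeds Y Z -> embeds X Z.
Proof. move=> [f hf] [g hg]; exists (fun x => g (f x)); exact: emb_comp. Qed.

Lemma emb_factor (F G X : structure mu) (f : F -> G) (a : F -> X) (b : G -> X) :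
  embedding a -> embedding b -> (forall x, b (f x) = a x) -> embedding f.
Proof.
move=> [ai ar] [bi br] e; split.
  by move=> x y E; apply: ai; rewrite -!e E.
move=> i t; rewrite ar br -map_tuple_comp; rewrite (map_tuple_ext t e) //.
Qed.

Lemma emb_inv (X Y : structure mu) (f : X -> Y) :
  embedding f -> (forall y, exists x, f x = y) ->
  exists g : Y -> X, embedding g /\ forall y, f (g y) = y.
Proof.
move=> [fi fr] fs.
exists (fun y => proj1_sig (constructive_indefinite_description _ (fs y))).
set g := fun y => _.
have fg : forall y, f (g y) = y by move=> y; rewrite /g; case: constructive_indefinite_description.
split=> //; split; first by move=> x y E; rewrite -(fg x) -(fg y) E.
move=> i t; rewrite fr -map_tuple_comp (map_tuple_ext t fg).
by have -> : map_tuple id t = t by apply: val_inj; rewrite /= map_id.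
Qed.

Lemma ord0_False (x : 'I_0) : False.
Proof. by case: x. Qed.

Lemma emb_empty (mupos : forall i, 0 < mu i) (F : fstruct mu) (X : structure mu)
  (f : fs F -> X) : projT1 F = 0 -> embedding f.
Proof.
case: F f => n R /= f e; subst n; split; first by move=> x; case: (ord0_False x).
move=> i t; case: (ord0_False (tnth t (Ordinal (mupos i)))).
Qed.

End Emb.

Section Ustr.
Variables (I : Type) (mu : I -> nat).

Record ustr (V : Type) := US { dom : V -> Prop; urel : I -> seq V -> Prop }.

Definition toS V (Y : ustr V) : structure mu :=
  @Structure I mu {u | dom Y u} (fun i t => urel Y i (map (@proj1_sig _ _) t)).

Definition extends V (Y' Y : ustr V) :=
  (forall u, dom Y u -> dom Y' u) /\
  forall i (t : (mu i).-tuple V), (forall u, List.In u t -> dom Y u) ->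
    (urel Y' i t <-> urel Y i t).

Lemma extends_trans V (Y1 Y2 Y3 : ustr V) :
  extends Y3 Y2 -> extends Y2 Y1 -> extends Y3 Y1.
Proof.
move=> [d32 r32] [d21 r21]; split; first by move=> u /d21 /d32.
move=> i t H; rewrite r32; first exact: r21.
by move=> u /H /d21.
Qed.

Lemma extends_refl V (Y : ustr V) : extends Y Y.
Proof. by split. Qed.

Lemma In_sig V (Q : V -> Prop) n (t : n.-tuple {u | Q u}) u :
  List.In u (map (@proj1_sig _ _) t) -> Q u.
Proof. by move=> /List.in_map_iff [[x hx] [/= <- _]]. Qed.

Lemma incl_emb V (Y' Y : ustr V) (E : extends Y' Y) :
  embedding (fun p : toS Y => (exist (dom Y') (proj1_sig p) (E.1 _ (proj2_sig p)) : toS Y')).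
Proof.
split.
  move=> x y h; apply: sig_inj; exact: (f_equal (@proj1_sig _ _) h).
move=> i t /=; rewrite -map_comp /=.
symmetry; apply: (E.2 i (map_tuple (@proj1_sig _ _) t)).
exact: In_sig.
Qed.

Lemma incl_embeds V (Y' Y : ustr V) : extends Y' Y -> embeds (toS Y) (toS Y').
Proof. move=> E; eexists; exact: incl_emb E. Qed.

Lemma restrict V (Y' Y : ustr V) (X : structure mu) (f : X -> toS Y') :
  extends Y' Y -> embedding f -> (forall x, dom Y (proj1_sig (f x))) ->
  embeds X (toS Y).
Proof.
move=> E [fi fr] H.
exists (fun x => (exist (dom Y) (proj1_sig (f x)) (H x) : toS Y)); split.
  move=> x y /= h; apply: fi; apply: sig_inj; exact: (f_equal (@proj1_sig _ _) h).
move=> i t; rewrite fr /= -!map_comp.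
have e : map (fun x => proj1_sig (f x)) t = map (fun x => proj1_sig (f x)) t by [].
apply: (E.2 i (map_tuple (fun x => proj1_sig (f x)) t)).
by move=> u /List.in_map_iff [x [<- _]].
Qed.

Section Union.
Variables (V K : Type) (lt : K -> K -> Prop) (X : K -> Prop) (W : K -> ustr V).
Hypothesis tri : forall a b, lt a b \/ a = b \/ lt b a.
Hypothesis coh : forall s s', X s -> X s' -> lt s s' -> extends (W s') (W s).

Definition union : ustr V :=
  US (fun u => exists s (_ : X s), dom (W s) u)
     (fun i l => exists s (_ : X s), (forall u, List.In u l -> dom (W s) u) /\ urel (W s) i l).

Lemma union_ext s : X s -> extends union (W s).
Proof.
move=> Xs; split; first by move=> u h; exists s, Xs.
move=> i t H; split; last by move=> h; exists s, Xs.
move=> [s' [Xs' [H' r']]].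
case: (tri s s') => [lt1|[e|lt1]].
- by have [_ r] := coh Xs Xs' lt1; rewrite -r.
- by subst s'.
- by have [_ r] := coh Xs' Xs lt1; rewrite r.
Qed.

Lemma bound_list (A : Type) (Q : K -> A -> Prop) :
  (forall s s' a, X s -> X s' -> lt s s' -> Q s a -> Q s' a) ->
  forall l : seq A, (forall a, List.In a l -> exists s, X s /\ Q s a) -> l <> [::] ->
  exists s, X s /\ forall a, List.In a l -> Q s a.
Proof.
move=> mono; elim=> [|a l IH] // H _.
have [s2 [X2 Q2]] := H a (or_introl erefl).
case: l IH H => [|b l] IH H.
  by exists s2; split=> // x [<-|[]].
have [s1 [X1 Q1]] : exists s, X s /\ forall a, List.In a (b :: l) -> Q s a.
  by apply: IH => // x hx; apply: H; right.
case: (tri s1 s2) => [lt1|[e|lt1]].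
- exists s2; split=> // x [<-|hx] //; exact: mono X1 X2 lt1 (Q1 _ hx).
- subst s2; exists s1; split=> // x [<-|hx] //; exact: Q1.
- exists s1; split=> // x [<-|hx]; [exact: mono X2 X1 lt1 Q2 | exact: Q1].
Qed.

Variable P : fstruct mu -> Prop.
Hypothesis emptyP : forall F, projT1 F = 0 -> P F.

Lemma union_age :
  (forall s, X s -> forall F, age (toS (W s)) F -> P F) ->
  forall F, age (toS union) F -> P F.
Proof.
move=> HW F [f [fi fr]].
case: (posnP (projT1 F)) => [/emptyP //|npos].
have [s [Xs Qs]] : exists s, X s /\ forall x, List.In x (enum 'I_(projT1 F)) -> dom (W s) (proj1_sig (f x)).
  apply: (bound_list (Q := fun s x => dom (W s) (proj1_sig (f x)))).
  - by move=> s s' a Xs Xs' l; apply: (coh Xs Xs' l).1.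
  - move=> x _; have [s [Xs h]] := proj2_sig (f x); by exists s.
  - by move=> e; have := f_equal size e; rewrite size_enum_ord /= => h; rewrite h in npos.
apply: (HW s Xs).
apply: (restrict (Y' := union) (union_ext Xs) (conj fi fr)).
by move=> x; apply: Qs; apply: In_mem; rewrite mem_enum.
Qed.

End Union.
End Ustr.

Section Fsub.
Variables (I : Type) (mu : I -> nat).

Definition fsub (X : structure mu) (l : seq X) : fstruct mu :=
  existT (fun n => forall i : I, (mu i).-tuple 'I_n -> Prop) (size l)
    (fun i t => Defs.rel (map_tuple (tnth (in_tuple l)) t)).

Lemma fsub_emb (X : structure mu) (l : seq X) :
  injective (tnth (in_tuple l)) -> @embedding _ _ (fs (fsub l)) X (tnth (in_tuple l)).
Proof. by move=> h; split. Qed.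

Definition ofF (B : fstruct mu) : ustr I nat :=
  US (fun j => j < projT1 B)
     (fun i s => exists t : (mu i).-tuple 'I_(projT1 B), map val t = s /\ projT2 B i t).

Lemma ofF_to (B : fstruct mu) :
  embedding (fun p : toS mu (ofF B) => (Ordinal (proj2_sig p) : fs B)).
Proof.
split.
  move=> [x hx] [y hy] /= h; apply: sig_inj => /=; exact: (f_equal val h).
move=> i t /=; split.
  move=> [t' [e r]].
  have -> : map_tuple (fun p : toS mu (ofF B) => (Ordinal (proj2_sig p) : fs B)) t = t'.
    apply: val_inj; apply: (@inj_map _ _ val val_inj); rewrite e /= -map_comp.
    by apply: eq_map => -[x hx].
  exact: r.
move=> r; eexists; split; last exact: r.
by rewrite /= -map_comp; apply: eq_map => -[x hx].
Qed.

Lemma ofF_from (B : fstruct mu) :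
  embedding (fun x : fs B => (exist _ (val x) (ltn_ord x) : toS mu (ofF B))).
Proof.
split.
  move=> x y h; apply: val_inj; exact: (f_equal (@proj1_sig _ _) h).
move=> i t /=; split.
  move=> r; exists t; split=> //; rewrite -map_comp; exact: eq_map.
move=> [t' [e r]].
have -> : t = t'.
  apply: val_inj; apply: (@inj_map _ _ val val_inj); rewrite e -map_comp; exact: eq_map.
exact: r.
Qed.

Lemma ofF_ext (B B' : fstruct mu) (e : fs B -> fs B') :
  embedding e -> (forall x, val (e x) = val x) -> extends mu (ofF B') (ofF B).
Proof.
move=> [ei er] ev; split.
  move=> j /= hj; have := ltn_ord (e (Ordinal hj)); by rewrite ev.
move=> i t H /=.
have [t0 e0] : exists t0 : (mu i).-tuple 'I_(projT1 B), map_tuple val t0 = t.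
  apply: tuple_lift => y /H /= hy; by exists (Ordinal hy).
have uniq0 : forall n (t1 t2 : (mu i).-tuple 'I_n), map val t1 = map val t2 -> t1 = t2.
  move=> n t1 t2 h; apply: val_inj; exact: (inj_map val_inj h).
split.
  move=> [t' [e' r']]; exists t0; split; first by rewrite -e0.
  apply/(er i t0).
  have -> : map_tuple e t0 = t' by apply: uniq0; rewrite e' -e0 /= -map_comp; apply: eq_map.
  exact: r'.
move=> [t' [e' r']]; exists (map_tuple e t0); split.
  by rewrite /= -map_comp -e0 /=; apply: eq_map.
have -> : t0 = t' by apply: uniq0; rewrite e' -e0.
by apply/(er i t').
Qed.

End Fsub.

Lemma pos_of_In (T : Type) (s : seq T) x :
  List.In x s -> exists i : 'I_(size s), tnth (in_tuple s) i = x.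
Proof.
elim: s => [|a s IH] //= [->|h].
  by exists ord0; rewrite (tnth_nth x).
have [i hi] := IH h.
exists (lift ord0 i); rewrite (tnth_nth x) /= -hi (tnth_nth x) add0n.
by apply: set_nth_default; exact: ltn_ord.
Qed.

Lemma bound_nat (T : Type) (f : T -> nat) (s : seq T) :
  exists k, forall y, List.In y s -> f y < k.
Proof.
elim: s => [|a s [k hk]]; first by exists 0.
exists (maxn k (f a).+1) => y /= [<-|/hk h].
  by rewrite leq_max leqnn orbT.
by rewrite leq_max h.
Qed.

Section Relabel.
Variables (I : Type) (mu : I -> nat).

Lemma relabel (n : nat) (Bm : fstruct mu) (g2 : 'I_n -> fs Bm) : injective g2 ->
  exists (B' : fstruct mu) (tau : fs B' -> fs Bm), embedding tau /\
    (forall y, exists x, tau x = y) /\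
    forall x : 'I_n, exists o : fs B', val o = val x /\ tau o = g2 x.
Proof.
move=> g2i.
set m := projT1 Bm.
pose lst : seq 'I_m := map g2 (enum 'I_n) ++ [seq y <- enum 'I_m | y \notin codom g2].
have ul : uniq lst.
  rewrite cat_uniq map_inj_uniq // enum_uniq filter_uniq ?enum_uniq // andbT /=.
  apply/hasPn => y; rewrite mem_filter => /andP [hy _]; apply: contra hy.
  by rewrite codomE.
have inl : forall y, y \in lst.
  move=> y; rewrite mem_cat mem_filter mem_enum andbT.
  by rewrite -codomE orbN.
exists (fsub (X := fs Bm) lst), (tnth (in_tuple lst)).
have ti : injective (tnth (in_tuple lst)).
  move=> i j h; apply: val_inj; apply/eqP.
  have e : nth (tnth (in_tuple lst) i) lst i == nth (tnth (in_tuple lst) i) lst j.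
    apply/eqP; exact: (etrans (esym (tnth_nth (tnth (in_tuple lst) i) (in_tuple lst) i)) (etrans h (tnth_nth (tnth (in_tuple lst) i) (in_tuple lst) j))).
  by move: e; rewrite (nth_uniq _ (ltn_ord i) (ltn_ord j) ul).
split; first exact: fsub_emb.
split.
  move=> y; have hy : index y lst < size lst by rewrite index_mem.
  by exists (Ordinal hy); rewrite (tnth_nth y) /= nth_index.
move=> x.
have hx : val x < size lst by rewrite size_cat size_map size_enum_ord (leq_trans (ltn_ord x)) // leq_addr.
exists (Ordinal hx); split=> //.
rewrite (tnth_nth (g2 x)) /= nth_cat size_map size_enum_ord ltn_ord.
by rewrite (nth_map x) ?size_enum_ord // nth_ord_enum.
Qed.

End Relabel.

Lemma tnth_In (T : Type) (s : seq T) (i : 'I_(size s)) : List.In (tnth (in_tuple s) i) s.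
Proof.
rewrite (tnth_nth (tnth (in_tuple s) i)).
move: (tnth (in_tuple s) i) => x0; case: i => i /=.
elim: s i => [|a s IH] [|i] //= hi; [by left | right; exact: IH].
Qed.

Lemma notin_map (T : Type) (c : T -> nat) k (s : seq T) :
  (forall y, List.In y s -> c y < k) -> k \notin map c s.
Proof.
elim: s => [|a s IH] //= H; rewrite in_cons negb_or IH ?andbT.
  by have := H a (or_introl erefl); rewrite ltn_neqAle eq_sym => /andP [].
by move=> y hy; apply: H; right.
Qed.

Section Omega.
Variables (I : Type) (mu : I -> nat) (P : fstruct mu -> Prop).
Hypothesis mupos : forall i, 0 < mu i.
Hypothesis Pdown : forall F G, P G -> fle F G -> P F.
Hypothesis amal : amalgamation P.
Hypothesis emptyP : forall F, projT1 F = 0 -> P F.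
Variables (C : structure mu) (c : C -> nat).
Hypothesis cinj : injective c.
Hypothesis ageC : forall F, age C F -> P F.
Variable F0 : fstruct mu.
Hypothesis PF0 : P F0.

Definition dec (j : nat) : option C :=
  match excluded_middle_informative (exists x, c x = j) with
  | left H => Some (proj1_sig (constructive_indefinite_description _ H))
  | right _ => None end.

Lemma dec_some j x : dec j = Some x -> c x = j.
Proof.
rewrite /dec; case: excluded_middle_informative => // H [<-].
by case: constructive_indefinite_description.
Qed.

Lemma dec_c x : dec (c x) = Some x.
Proof.
rewrite /dec; case: excluded_middle_informative => [H|[]]; last by exists x.
by case: constructive_indefinite_description => y /= /cinj ->.
Qed.

Fixpoint l k : seq C :=
  if k is k'.+1 then l k' ++ (if dec k' is Some x then [:: x] else [::]) else [::].

Lemma lcode k y : List.In y (l k) -> c y < k.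
Proof.
elim: k => [|k IH] //= /List.in_app_iff [/IH h|]; first by rewrite ltnS ltnW.
case E: (dec k) => [x|] //= [<-|[]]; by rewrite (dec_some E).
Qed.

Lemma luniq k : uniq (map c (l k)).
Proof.
elim: k => [|k IH] //=; rewrite map_cat cat_uniq IH /=.
case E: (dec k) => [x|] //=; rewrite andbT orbF (dec_some E).
apply: notin_map; exact: lcode.
Qed.

Lemma lIn k x : c x < k -> List.In x (l k).
Proof.
elim: k => [|k IH] //; rewrite ltnS leq_eqVlt => /orP [/eqP E|h] /=; apply/List.in_app_iff.
  by right; rewrite -E dec_c; left.
by left; apply: IH.
Qed.

Lemma lpre k k' : k <= k' -> exists s, l k' = l k ++ s.
Proof.
elim: k' => [|k' IH]; first by rewrite leqn0 => /eqP ->; exists [::].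
rewrite leq_eqVlt => /orP [/eqP ->|h]; first by exists [::]; rewrite cats0.
have [s e] := IH h; exists (s ++ (if dec k' is Some x then [:: x] else [::])).
by rewrite /= e catA.
Qed.

Lemma lsize k k' : k <= k' -> size (l k) <= size (l k').
Proof. by move=> /lpre [s ->]; rewrite size_cat leq_addr. Qed.

Lemma lnth k k' i x0 : k <= k' -> i < size (l k) -> nth x0 (l k') i = nth x0 (l k) i.
Proof. by move=> /lpre [s ->] h; rewrite nth_cat h. Qed.

Lemma tnth_l_inj k : injective (tnth (in_tuple (l k))).
Proof.
move=> i j h; apply: val_inj; apply/eqP.
set x := tnth (in_tuple (l k)) i.
have e : nth x (l k) i = nth x (l k) j.
  exact: (etrans (esym (tnth_nth x (in_tuple (l k)) i)) (etrans h (tnth_nth x (in_tuple (l k)) j))).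
have hi : i < size (map c (l k)) by rewrite size_map ltn_ord.
have hj : j < size (map c (l k)) by rewrite size_map ltn_ord.
rewrite -(nth_uniq (c x) hi hj (luniq k)) !(nth_map x) ?ltn_ord //.
by rewrite e.
Qed.

Definition A k : fstruct mu := fsub (l k).

Lemma A_emb k : @embedding _ _ (fs (A k)) C (tnth (in_tuple (l k))).
Proof. exact: (@fsub_emb _ _ C (l k) (@tnth_l_inj k)). Qed.

Lemma PA k : P (A k).
Proof. apply: ageC; eexists; exact: A_emb. Qed.

Definition incl k : fs (A k) -> fs (A k.+1) := widen_ord (lsize (leqnSn k)).

Lemma incl_embk k : embedding (@incl k).
Proof.
apply: (emb_factor (A_emb k) (A_emb k.+1)) => i.
set x0 := tnth (in_tuple (l k)) i.
rewrite [LHS](tnth_nth x0) [RHS](tnth_nth x0).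
exact: (lnth x0 (leqnSn k) (ltn_ord i)).
Qed.

Definition st k := {B : fstruct mu & {h : fs (A k) -> fs B | embedding h /\ P B}}.

Lemma step k (s : st k) : exists s' : st k.+1, exists e : fs (projT1 s) -> fs (projT1 s'),
  embedding e /\ (forall x, val (e x) = val x) /\
  forall i, proj1_sig (projT2 s') (incl i) = e (proj1_sig (projT2 s) i).
Proof.
case: s => B [h [he PB]] /=.
have [Bm [g1 [g2 [PBm [g1e [g2e gc]]]]]] := amal (PA k) (PA k.+1) PB (incl_embk k) he.
have [B' [tau [te [ts tv]]]] := relabel g2e.1.
have [inv [ie iv]] := emb_inv te ts.
have PB' : P B' by apply: (Pdown PBm); exists tau.
exists (existT _ B' (exist _ (fun x => inv (g1 x)) (conj (emb_comp g1e ie) PB'))).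
exists (fun x => inv (g2 x)) => /=.
split; first exact: emb_comp g2e ie.
split; last by move=> i; rewrite gc.
move=> x; have [o [vo to]] := tv x.
have -> : inv (g2 x) = o by apply: te.1; rewrite iv to.
exact vo.
Qed.

Definition next k (s : st k) : st k.+1 :=
  proj1_sig (constructive_indefinite_description _ (step s)).

Definition init : st 0 :=
  existT _ F0 (exist _ (fun x : fs (A 0) => False_rect (fs F0) (ord0_False x))
     (conj (@emb_empty _ _ mupos (A 0) (fs F0) _ erefl) PF0)).

Fixpoint stF k : st k := if k is k'.+1 then next (stF k') else init.

Definition Bk k := projT1 (stF k).
Definition hk k : fs (A k) -> fs (Bk k) := proj1_sig (projT2 (stF k)).
Arguments hk : clear implicits.

Lemma hk_emb k : embedding (hk k).
Proof. exact: (proj2_sig (projT2 (stF k))).1. Qed.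

Lemma PBk k : P (Bk k).
Proof. exact: (proj2_sig (projT2 (stF k))).2. Qed.

Lemma stepk k : exists e : fs (Bk k) -> fs (Bk k.+1), embedding e /\
  (forall x, val (e x) = val x) /\ forall i, hk k.+1 (incl i) = e (hk k i).
Proof.
rewrite /Bk /hk /= /next.
by case: (constructive_indefinite_description _ _) => s' H.
Qed.

Definition Wk k := ofF (Bk k).

Lemma coh1 k : extends mu (Wk k.+1) (Wk k).
Proof. have [e [ee [ev _]]] := stepk k; exact: ofF_ext ee ev. Qed.

Lemma cohk k k' : k < k' -> extends mu (Wk k') (Wk k).
Proof.
elim: k' => [|k' IH] //; rewrite ltnS leq_eqVlt => /orP [/eqP ->|h].
  exact: coh1.
exact: extends_trans (coh1 k') (IH h).
Qed.

Lemma tri_nat (a b : nat) : a < b \/ a = b \/ b < a.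
Proof. by case: ltngtP; auto. Qed.

Lemma coh_nat (s s' : nat) : True -> True -> s < s' -> extends mu (Wk s') (Wk s).
Proof. move=> _ _; exact: cohk. Qed.

Definition Lnat := union (fun _ : nat => True) Wk.
Definition L := toS mu Lnat.

Lemma L_age G : age L G -> P G.
Proof.
apply: (union_age tri_nat coh_nat emptyP) => s _ H [f hf].
apply: (Pdown (PBk s)); eexists; exact: emb_comp hf (ofF_to _).
Qed.

Definition Gk k (i : fs (A k)) : L :=
  let y := (exist _ (val (hk k i)) (ltn_ord _) : toS mu (Wk k)) in
  (exist _ (proj1_sig y) ((union_ext tri_nat coh_nat (s := k) Logic.I).1 _ (proj2_sig y)) : L).

Lemma Gk_emb k : embedding (@Gk k).
Proof.
exact: (emb_comp (hk_emb k) (emb_comp (ofF_from _) (incl_emb (union_ext tri_nat coh_nat (s := k) Logic.I)))).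
Qed.

Lemma L_F0 : embeds (fs F0) L.
Proof.
exists (fun x : fs (Bk 0) => (exist _ (val x) ((union_ext tri_nat coh_nat (s := 0) Logic.I).1 _ (ltn_ord x)) : L)).
exact: (emb_comp (ofF_from _) (incl_emb (union_ext tri_nat coh_nat (s := 0) Logic.I))).
Qed.

Lemma hk_step k (i : 'I_(size (l k))) (i' : 'I_(size (l k.+1))) :
  val i = val i' -> val (hk k.+1 i') = val (hk k i).
Proof.
move=> h; have [e [ee [ev ec]]] := stepk k.
have -> : i' = incl i by apply: val_inj.
by rewrite ec ev.
Qed.

Lemma HC k k' : k <= k' -> forall (i : 'I_(size (l k))) (i' : 'I_(size (l k'))),
  val i = val i' -> val (hk k i) = val (hk k' i').
Proof.
elim: k' => [|k' IH].
  rewrite leqn0 => /eqP E; subst k => i i' h.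
  by have -> : i = i' by apply: val_inj.
rewrite leq_eqVlt => /orP [/eqP E|lt] i i' h.
  subst k; by have -> : i = i' by apply: val_inj.
move: lt; rewrite ltnS => lt.
have hi : val i < size (l k') by apply: leq_trans (ltn_ord i) (lsize lt).
rewrite (IH lt i (Ordinal hi) erefl).
by rewrite (hk_step (i := Ordinal hi) (i' := i')).
Qed.

Definition idx (x : C) : 'I_(size (l (c x).+1)) :=
  proj1_sig (constructive_indefinite_description _ (pos_of_In (lIn (ltnSn (c x))))).

Lemma idxP x : tnth (in_tuple (l (c x).+1)) (idx x) = x.
Proof. rewrite /idx; by case: constructive_indefinite_description. Qed.

Definition phi (x : C) : L := Gk (idx x).

Lemma phi_cons k (i : 'I_(size (l k))) : phi (tnth (in_tuple (l k)) i) = Gk i.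
Proof.
apply: sig_inj => /=.
set x := tnth (in_tuple (l k)) i.
have cx : (c x).+1 <= k by apply: lcode; exact: tnth_In.
have ho : val (idx x) < size (l k) by apply: leq_trans (ltn_ord _) (lsize cx).
have e : Ordinal ho = i.
  apply: tnth_l_inj.
  rewrite [LHS](tnth_nth x) /= (lnth x cx (ltn_ord (idx x))).
  by have := idxP x; rewrite (tnth_nth x) => ->.
apply: HC cx _ _ _; by rewrite -e.
Qed.

Lemma phi_emb : embedding phi.
Proof.
split.
  move=> x y E.
  have [k hk] := bound_nat c [:: x; y].
  have [ix ex] := pos_of_In (lIn (hk x (or_introl erefl))).
  have [iy ey] := pos_of_In (lIn (hk y (or_intror (or_introl erefl)))).
  move: E; rewrite -ex -ey !phi_cons => /(Gk_emb k).1 ->; done.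
move=> i t.
have [k hk] := bound_nat c t.
have [t' et] : exists t' : (mu i).-tuple 'I_(size (l k)), map_tuple (tnth (in_tuple (l k))) t' = t.
  apply: tuple_lift => y /hk /lIn; exact: pos_of_In.
subst t; rewrite -(A_emb k).2 -map_tuple_comp.
rewrite (map_tuple_ext t' (@phi_cons k)).
exact: (Gk_emb k).2.
Qed.

Lemma omega : exists (L : structure mu) (cL : L -> nat) (phi : C -> L),
  injective cL /\ embedding phi /\ embeds (fs F0) L /\ forall G, age L G -> P G.
Proof.
exists L, (@proj1_sig _ _), phi; split; first by move=> x y; apply: sig_inj.
split; first exact: phi_emb.
split; [exact: L_F0 | exact: L_age].
Qed.

End Omega.

Section Outer.
Variables (I : Type) (mu : I -> nat) (P : fstruct mu -> Prop).
Hypothesis mupos : forall i, 0 < mu i.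
Hypothesis Pdown : forall F G, P G -> fle F G -> P F.
Hypothesis amal : amalgamation P.
Hypothesis emptyP : forall F, projT1 F = 0 -> P F.
Variables (T : Type) (lt : T -> T -> Prop).
Hypothesis wf : well_founded lt.
Hypothesis trans : forall x y z, lt x y -> lt y z -> lt x z.
Hypothesis tot : forall x y, lt x y \/ x = y \/ lt y x.
Hypothesis cnt : forall t, countable_type {x : T | lt x t}.

Definition U := (T * nat)%type.

Lemma lt_irr t : ~ lt t t.
Proof.
have := wf t; elim=> x _ IH h; exact: (IH x h h).
Qed.

Lemma transfer t (Y : ustr I U) (L : structure mu) (cL : L -> nat) (phi : toS mu Y -> L) :
  (forall u, dom Y u -> lt u.1 t) -> injective cL -> embedding phi ->
  exists Y' : ustr I U, extends mu Y' Y /\ (forall u, dom Y' u -> lt u.1 t \/ u.1 = t) /\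
    exists psi : toS mu Y' -> L, embedding psi /\ forall z, exists p, psi p = z.
Proof.
move=> Hb cLi [phii phir].
pose Rl (u : U) (z : L) := (exists H : dom Y u, phi (exist _ u H) = z) \/
   (~ dom Y u /\ u.1 = t /\ cL z = u.2 /\ forall x, phi x <> z).
have Runiq : forall u z z', Rl u z -> Rl u z' -> z = z'.
  move=> u z z' [[H1 e1]|[n1 [_ [c1 _]]]] [[H2 e2]|[n2 [_ [c2 _]]]].
  - by rewrite -e1 -e2 (proof_irrelevance _ H1 H2).
  - by case: n2.
  - by case: n1.
  - apply: cLi; by rewrite c1 c2.
pose D' u := exists z, Rl u z.
pose psi (p : {u | D' u}) := proj1_sig (constructive_indefinite_description _ (proj2_sig p)).
have psiP : forall p, Rl (proj1_sig p) (psi p).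
  by move=> p; rewrite /psi; case: constructive_indefinite_description.
pose Y' := US D' (fun i s => exists tp : (mu i).-tuple {u | D' u},
   map (@proj1_sig _ _) tp = s /\ Defs.rel (map_tuple psi tp)).
have domI : forall u, dom Y u -> D' u.
  move=> u h; exists (phi (exist _ u h)); left; by exists h.
have psi_old : forall (p : toS mu Y), psi (exist D' (proj1_sig p) (domI _ (proj2_sig p))) = phi p.
  move=> [u h]; apply: (Runiq _ _ _ (psiP _)); left; by exists h.
have sigtup : forall (Q : U -> Prop) n (t1 t2 : n.-tuple {u | Q u}),
    map (@proj1_sig _ _) t1 = map (@proj1_sig _ _) t2 -> t1 = t2.
  move=> Q n t1 t2 h; apply: val_inj; apply: (inj_map _ h) => x y; exact: sig_inj.
have psi_emb : @embedding _ _ (toS mu Y') L psi.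
  split.
    move=> p q e; apply: sig_inj.
    have := psiP p; have := psiP q; rewrite e.
    move=> [[Hq eq]|[nq [tq [cq nphq]]]] [[Hp ep]|[np [tp [cp nphp]]]].
    - by have := phii _ _ (etrans ep (esym eq)) => /(f_equal (@proj1_sig _ _)).
    - by case: (nphp _ eq).
    - by case: (nphq _ ep).
    - move: (proj1_sig p) (proj1_sig q) tp tq cp cq => [a1 b1] [a2 b2] /= -> -> -> ->; done.
  move=> i tp; rewrite /= /Y' /=; split; last by move=> h; exists tp.
  by move=> [tp' [e r]]; have <- : tp' = tp by apply: sigtup.
exists Y'; split.
  split=> // i t0 H.
  have [t1 e1] : exists t1 : (mu i).-tuple (toS mu Y), map_tuple (@proj1_sig _ _) t1 = t0.
    apply: tuple_lift => y /H hy; by exists (exist _ y hy).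
  subst t0; rewrite /=.
  have e2 : forall tp : (mu i).-tuple {u | D' u}, map (@proj1_sig _ _) tp = map (@proj1_sig _ _) t1 ->
      map_tuple psi tp = map_tuple phi t1.
    move=> tp etp.
    have -> : tp = map_tuple (fun p : toS mu Y => exist D' (proj1_sig p) (domI _ (proj2_sig p))) t1.
      by apply: sigtup; rewrite etp /= -map_comp.
    by rewrite -map_tuple_comp; apply: map_tuple_ext.
  split.
    by move=> [tp [etp r]]; apply/(phir i t1); rewrite -(e2 tp etp).
  move=> r; exists (map_tuple (fun p : toS mu Y => exist D' (proj1_sig p) (domI _ (proj2_sig p))) t1).
  have ee : map (@proj1_sig _ _) (map_tuple (fun p : toS mu Y => exist D' (proj1_sig p) (domI _ (proj2_sig p))) t1) = map (@proj1_sig _ _) t1.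
    by rewrite /= -map_comp.
  split; first exact: ee.
  rewrite (e2 _ ee); exact/(phir i t1).
split.
  move=> u [z [[H _]|[_ [e _]]]]; [left; exact: Hb | by right].
exists psi; split=> // z.
case: (classic (exists x, phi x = z)) => [[[u h] e]|nex].
  by exists (exist D' u (domI _ h)); rewrite (psi_old (exist _ u h)).
have Rz : Rl (t, cL z) z.
  right; split; first by move=> /Hb /= /lt_irr.
  by split=> //; split=> // x e; apply: nex; exists x.
by exists (exist D' (t, cL z) (ex_intro _ z Rz)); apply: (Runiq _ _ _ (psiP _)).
Qed.

Definition spec t (Y : ustr I U) (F : fstruct mu) (Y' : ustr I U) :=
  extends mu Y' Y /\ (forall u, dom Y' u -> lt u.1 t \/ u.1 = t) /\
  (forall G, age (toS mu Y') G -> P G) /\ embeds (fs F) (toS mu Y').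

Lemma ext_exists t (Y : ustr I U) (F : fstruct mu) :
  (forall u, dom Y u -> lt u.1 t) -> (forall G, age (toS mu Y) G -> P G) -> P F ->
  exists Y', spec t Y F Y'.
Proof.
move=> Hb HY PF.
have [f fi] := cnt t.
pose code (p : toS mu Y) : nat :=
  pickle (f (exist _ (proj1_sig p).1 (Hb _ (proj2_sig p))), (proj1_sig p).2).
have codei : injective code.
  move=> [[a1 b1] h1] [[a2 b2] h2] /(pcan_inj (@pickleK _)) /= [/fi e1 e2].
  apply: sig_inj => /=; subst b2; congr (_, _).
  exact: (f_equal (@proj1_sig _ _) e1).
have [L [cL [phi [cLi [phie [FL HL]]]]]] := omega mupos Pdown amal emptyP codei HY PF.
have [Y' [E [B [psi [psie psis]]]]] := transfer Hb cLi phie.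
exists Y'; split=> //; split=> //; split.
  move=> G [h he]; apply: HL; exists (fun x => psi (h x)); exact: emb_comp he psie.
have [inv [inve _]] := emb_inv psie psis.
exact: embeds_trans FL (ex_intro _ inv inve).
Qed.

Definition extU t (Y : ustr I U) (F : fstruct mu) : ustr I U :=
  epsilon (inhabits Y) (spec t Y F).

Variable g : T -> fstruct mu.
Hypothesis Pg : forall t, P (g t).

Definition Fstep t (rec : forall s, lt s t -> ustr I U) : ustr I U :=
  extU t (US (fun u => exists s (h : lt s t), dom (rec s h) u)
             (fun i l => exists s (h : lt s t), (forall u, List.In u l -> dom (rec s h) u) /\
                urel (rec s h) i l)) (g t).

Definition W : T -> ustr I U := Fix wf (fun _ => ustr I U) Fstep.

Lemma W_eq t : W t = extU t (union (fun s => lt s t) W) (g t).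
Proof.
rewrite /W Fix_eq //.
move=> x f f' H; have -> : f = f' by do 2 (apply: functional_extensionality_dep => ?); apply: H.
done.
Qed.

Lemma inv_all t : spec t (union (fun s => lt s t) W) (g t) (W t) /\
  forall s, lt s t -> extends mu (W t) (W s).
Proof.
elim/(well_founded_ind wf): t => t IH.
have coh : forall s s', lt s t -> lt s' t -> lt s s' -> extends mu (W s') (W s).
  by move=> s s' _ h l; exact: (IH s' h).2 s l.
have sp : spec t (union (fun s => lt s t) W) (g t) (W t).
  rewrite [W t]W_eq; apply: epsilon_spec; apply: ext_exists (Pg t).
    move=> u [s [h d]]; case: ((IH s h).1.2.1 u d) => [l|e]; [exact: trans l h | by rewrite e].
  apply: (union_age tot coh emptyP) => s h; exact: (IH s h).1.2.2.1.
split=> // s h.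
exact: extends_trans sp.1 (union_ext tot coh h).
Qed.

Lemma coh_all (s s' : T) : True -> True -> lt s s' -> extends mu (W s') (W s).
Proof. move=> _ _ h; exact: (inv_all s').2 s h. Qed.

Definition Sfin := toS mu (union (fun _ : T => True) W).

Lemma Sfin_age G : age Sfin G -> P G.
Proof. apply: (union_age tot coh_all emptyP) => s _; exact: (inv_all s).1.2.2.1. Qed.

Lemma Sfin_g t : embeds (fs (g t)) Sfin.
Proof.
apply: embeds_trans (inv_all t).1.2.2.2 _.
exact: incl_embeds (union_ext tot coh_all (s := t) Logic.I).
Qed.

End Outer.

Theorem corollary2 (I : Type) (mu : I -> nat) (P : fstruct mu -> Prop) :
  (forall i, 0 < mu i) ->
  ideal P -> amalgamation P -> iso_types_le_aleph1 P ->
  exists S : structure mu, forall F : fstruct mu, age S F <-> P F.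
Proof.
move=> mupos [[F0 PF0] [Pdown _]] amal [T [g [[lt [wf [trans [tot cnt]]]] [Pg Hg]]]].
have emptyP : forall F, projT1 F = 0 -> P F.
  move=> [n R] /= e; subst n; apply: (Pdown _ _ PF0).
  exists (fun x : 'I_0 => False_rect (fs F0) (ord0_False x)).
  exact: (@emb_empty _ _ mupos (existT _ 0 R) (fs F0) _ erefl).
exists (Sfin P wf g) => F; split.
  exact: (Sfin_age mupos Pdown amal emptyP trans tot cnt Pg).
move=> PF; have [t [f [fe _]]] := Hg F PF.
apply: embeds_trans (Sfin_g mupos Pdown amal emptyP wf trans tot cnt Pg t).
by exists f.
Qed.
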